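(* Let $R>0$, $\Omega=B_R(0)\subset\mathbb{R}^2$, $k>0$, and let $u_0\in C^0_{rad}(\overline\Omega)$ be nonnegative and such that $w(s,t):=\int_0^{\sqrt s}\rho u(\rho,t)\,d\rho$ satisfies $$\sup_{(s,t)\in(0,R^2)\times(0,T_{max})}\frac{w(s,t)}{s}<\infty.$$ Then there exists $C>0$ such that $z(s,t)\le Cs$ for all $s\in(0,R^2)$ and $t\in(0,T_{max})$, where $z(s,t):=k\int_0^{\sqrt s}\rho v(\rho,t)\,d\rho$.
   Context: $C^0_{rad}(\overline\Omega)$ denotes continuous functions on $\overline\Omega$ radially symmetric about $0$; radial functions are written as functions of $r=|x|$. $(u,v)$ with maximal existence time $T_{max}\in(0,\infty]$ is the solution associated with $u_0$: the unique pair of nonnegative functions $u\in C^0(\overline{\Omega}\times[0,T_{max}))\cap C^{2,1}(\overline{\Omega}\times(0,T_{max}))$, $v\in C^{2,0}(\overline{\Omega}\times(0,T_{max}))$ solving classically $u_t=\Delta u-\nabla\cdot(u\nabla v)$, $0=\Delta v-kv+u$ in $\Omega\times(0,T_{max})$, $\frac{\partial u}{\partial\nu}-u\frac{\partial v}{\partial\nu}=0$ and $v=0$ on $\partial\Omega$, $u(\cdot,0)=u_0$, with $T_{max}$ maximal such that $T_{max}<\infty$ implies $\limsup_{t\nearrow T_{max}}\|u(\cdot,t)\|_{L^\infty(\Omega)}=\infty$; it is radial for radial $u_0$. *)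

(* Defs.v *)
From Stdlib Require Import Reals.
From Coquelicot Require Import Coquelicot.
Open Scope R_scope.

(* Points of R^2 are written (a,b); space-time functions are u : R -> R -> R -> R,
   u a b t = u((a,b),t).  The domain Omega = B_Rad(0) in R^2. *)
Definition inB (Rad a b : R) : Prop := a ^ 2 + b ^ 2 < Rad ^ 2.
Definition clB (Rad a b : R) : Prop := a ^ 2 + b ^ 2 <= Rad ^ 2.
Definition bdB (Rad a b : R) : Prop := a ^ 2 + b ^ 2 = Rad ^ 2.

Definition cont3_on (S : R -> R -> R -> Prop) (f : R -> R -> R -> R) : Prop :=
  forall a b c, S a b c -> forall eps, 0 < eps -> exists d, 0 < d /\
    forall a' b' c', S a' b' c' -> Rabs (a' - a) < d -> Rabs (b' - b) < d ->
      Rabs (c' - c) < d -> Rabs (f a' b' c' - f a b c) < eps.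

Definition cont2_on (S : R -> R -> Prop) (f : R -> R -> R) : Prop :=
  forall a b, S a b -> forall eps, 0 < eps -> exists d, 0 < d /\
    forall a' b', S a' b' -> Rabs (a' - a) < d -> Rabs (b' - b) < d ->
      Rabs (f a' b' - f a b) < eps.

Definition ext_cont (Sin Scl : R -> R -> R -> Prop) (f : R -> R -> R -> R) : Prop :=
  exists g, cont3_on Scl g /\ forall a b c, Sin a b c -> g a b c = f a b c.

Definition d1 (f : R -> R -> R -> R) : R -> R -> R -> R :=
  fun a b t => Derive (fun y => f y b t) a.
Definition d2 (f : R -> R -> R -> R) : R -> R -> R -> R :=
  fun a b t => Derive (fun y => f a y t) b.
Definition dt (f : R -> R -> R -> R) : R -> R -> R -> R :=
  fun a b t => Derive (fun s => f a b s) t.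

Definition ex_d2x (f : R -> R -> R -> R) (a b t : R) : Prop :=
  ex_derive (fun y => f y b t) a /\ ex_derive (fun y => f a y t) b /\
  ex_derive (fun y => d1 f y b t) a /\ ex_derive (fun y => d1 f a y t) b /\
  ex_derive (fun y => d2 f y b t) a /\ ex_derive (fun y => d2 f a y t) b.

Definition lap (f : R -> R -> R -> R) : R -> R -> R -> R :=
  fun a b t => d1 (d1 f) a b t + d2 (d2 f) a b t.

Definition is_KS_solution (Rad k : R) (u0 : R -> R -> R) (u v : R -> R -> R -> R)
    (Tmax : Rbar) : Prop :=
  let Int := fun a b t => inB Rad a b /\ 0 < t /\ Rbar_lt (Finite t) Tmax in
  let Cl := fun a b t => clB Rad a b /\ 0 < t /\ Rbar_lt (Finite t) Tmax in
  let Cl0 := fun a b t => clB Rad a b /\ 0 <= t /\ Rbar_lt (Finite t) Tmax in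
  Rbar_lt (Finite 0) Tmax /\
  (* u in C^0(clOmega x [0,Tmax)), v continuous on clOmega x (0,Tmax) *)
  cont3_on Cl0 u /\ cont3_on Cl v /\
  (forall a b t, Cl0 a b t -> 0 <= u a b t) /\
  (forall a b t, Cl a b t -> 0 <= v a b t) /\
  (* u in C^{2,1}(clOmega x (0,Tmax)), v in C^{2,0}(clOmega x (0,Tmax)) *)
  (forall a b t, Int a b t ->
     ex_d2x u a b t /\ ex_derive (fun s => u a b s) t /\ ex_d2x v a b t) /\
  ext_cont Int Cl (dt u) /\
  ext_cont Int Cl (d1 (d1 u)) /\ ext_cont Int Cl (d2 (d1 u)) /\
  ext_cont Int Cl (d1 (d2 u)) /\ ext_cont Int Cl (d2 (d2 u)) /\
  ext_cont Int Cl (d1 (d1 v)) /\ ext_cont Int Cl (d2 (d1 v)) /\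
  ext_cont Int Cl (d1 (d2 v)) /\ ext_cont Int Cl (d2 (d2 v)) /\
  (forall a b t, Int a b t ->
     dt u a b t = lap u a b t
       - (d1 (fun a' b' t' => u a' b' t' * d1 v a' b' t') a b t
          + d2 (fun a' b' t' => u a' b' t' * d2 v a' b' t') a b t)) /\
  (forall a b t, Int a b t -> 0 = lap v a b t - k * v a b t + u a b t) /\
  (* boundary conditions, with the gradients taken as the continuous extensions
     to the closure; outer normal nu = x / Rad *)
  (exists gu1 gu2 gv1 gv2,
     cont3_on Cl gu1 /\ cont3_on Cl gu2 /\ cont3_on Cl gv1 /\ cont3_on Cl gv2 /\
     (forall a b t, Int a b t ->
        gu1 a b t = d1 u a b t /\ gu2 a b t = d2 u a b t /\
        gv1 a b t = d1 v a b t /\ gv2 a b t = d2 v a b t) /\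
     (forall a b t, bdB Rad a b -> 0 < t -> Rbar_lt (Finite t) Tmax ->
        (a * gu1 a b t + b * gu2 a b t) / Rad
          - u a b t * ((a * gv1 a b t + b * gv2 a b t) / Rad) = 0)) /\
  (forall a b t, bdB Rad a b -> 0 < t -> Rbar_lt (Finite t) Tmax -> v a b t = 0) /\
  (forall a b, clB Rad a b -> u a b 0 = u0 a b) /\
  (* maximality: Tmax < oo implies limsup_{t -> Tmax} ||u(.,t)||_oo = oo *)
  (match Tmax with
   | Finite T => forall M t0, t0 < T -> exists t a b,
       t0 < t /\ t < T /\ 0 <= t /\ clB Rad a b /\ M < u a b t
   | _ => True
   end).

Definition radial2 (Rad : R) (f : R -> R -> R) : Prop :=
  forall a b a' b', clB Rad a b -> a ^ 2 + b ^ 2 = a' ^ 2 + b' ^ 2 -> f a b = f a' b'.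

(* w(s,t) = int_0^{sqrt s} rho u(rho,t) drho, z(s,t) = k int_0^{sqrt s} rho v(rho,t) drho,
   with the radial profile read off along the positive first axis. *)
Definition wfun (u : R -> R -> R -> R) (s t : R) : R :=
  RInt (fun r => r * u r 0 t) 0 (sqrt s).
Definition zfun (k : R) (v : R -> R -> R -> R) (s t : R) : R :=
  k * RInt (fun r => r * v r 0 t) 0 (sqrt s).

(* Main.v *)
Require Import Defs.
From Stdlib Require Import Reals Lra.
From Coquelicot Require Import Coquelicot.
Open Scope R_scope.

Lemma loc_of (x d : R) (P : R -> Prop) : 0 < d -> (forall y, Rabs (y - x) < d -> P y) -> locally x P.
Proof. intros Hd H. exists (mkposreal d Hd). intros y Hy. apply H. exact Hy. Qed.

Lemma sqrt_lt_R a b : 0 <= a -> 0 < b -> a < b^2 -> sqrt a < b.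
Proof. intros. rewrite <- (sqrt_pow2 b) by lra. apply sqrt_lt_1_alt; lra. Qed.

Lemma d22_radial (Rad : R) (F : R -> R -> R) (x : R) :
  0 < x < Rad -> radial2 Rad F ->
  (forall y, -Rad < y < Rad -> ex_derive (fun z => F z 0) y) ->
  ex_derive (fun z => Derive (fun w => F w 0) z) x ->
  is_derive (fun y => Derive (fun z => F x z) y) 0 (Derive (fun z => F z 0) x / x).
Proof.
  intros Hx Hrad Hd1 Hd2.
  set (f := fun z => F z 0). set (rho := fun y => sqrt (x^2 + y^2)).
  assert (Hb : forall y, Rabs y < Rad - x -> x^2 + y^2 < Rad^2).
  { intros y Hy. apply Rabs_lt_between in Hy. nra. }
  assert (Hrho : forall y, Rabs y < Rad - x -> 0 < rho y < Rad).
  { intros y Hy. specialize (Hb y Hy). unfold rho. split.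
    - apply sqrt_lt_R0. nra.
    - apply sqrt_lt_R; nra. }
  assert (Hloc : forall y, Rabs y < Rad - x -> F x y = f (rho y)).
  { intros y Hy. specialize (Hb y Hy). unfold f, rho. apply Hrad.
    - unfold clB; lra.
    - rewrite pow2_sqrt by nra. ring. }
  assert (Hdr : forall y, is_derive rho y (y / rho y)).
  { intros y. unfold rho.
    assert (Hp : 0 < x^2 + y^2) by nra.
    assert (H := is_derive_sqrt (fun y => x^2 + y^2) y (2 * y)).
    replace (y / sqrt (x^2 + y^2)) with (2 * y / (2 * sqrt (x^2+y^2))).
    apply H. auto_derive; auto; ring. exact Hp.
    field. apply Rgt_not_eq, sqrt_lt_R0. exact Hp. }
  assert (HD : forall y, Rabs y < Rad - x ->
     Derive (fun z => F x z) y = Derive f (rho y) * (y / rho y)).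
  { intros y Hy.
    rewrite (Derive_ext_loc (fun z => F x z) (fun z => f (rho z))).
    - apply is_derive_unique.
      assert (H := is_derive_comp f rho y (Derive f (rho y)) (y / rho y)).
      replace (Derive f (rho y) * (y / rho y)) with (scal (y / rho y) (Derive f (rho y))).
      apply H. apply Derive_correct. apply Hd1. specialize (Hrho y Hy). lra.
      apply Hdr. unfold scal; simpl; unfold mult; simpl. ring.
    - apply (loc_of y (Rad - x - Rabs y)). lra.
      intros z Hz. apply Hloc.
      assert (Rabs z <= Rabs (z - y) + Rabs y).
      { replace z with ((z - y) + y) at 1 by ring. apply Rabs_triang. }
      lra. }
  assert (Hr0 : rho 0 = x).
  { unfold rho. replace (x^2 + 0^2) with (x^2) by ring. apply sqrt_pow2. lra. }
  apply (is_derive_ext_loc (fun y => Derive f (rho y) * (y / rho y))).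
  { apply (loc_of 0 (Rad - x)). lra. intros y Hy. rewrite HD. reflexivity.
    replace (y - 0) with y in Hy by ring. exact Hy. }
  assert (H1 : is_derive (fun y => Derive f (rho y)) 0 (scal (0 / rho 0) (Derive (Derive f) (rho 0)))).
  { apply (is_derive_comp (Derive f) rho 0). apply Derive_correct. rewrite Hr0. exact Hd2.
    apply Hdr. }
  assert (H2 : is_derive (fun y => y / rho y) 0 (1 / x)).
  { unfold rho. auto_derive.
    - split. nra. split; auto. apply Rgt_not_eq, sqrt_lt_R0. nra.
    - replace (x * (x * 1) + 0 * (0 * 1)) with (x^2) by ring. rewrite sqrt_pow2 by lra.
      field. lra. }
  assert (H3 := is_derive_mult _ _ 0 _ _ H1 H2).
  replace (Derive f x / x) with (plus (mult (scal (0 / rho 0) (Derive (Derive f) (rho 0))) (0 / rho 0)) (mult (Derive f (rho 0)) (1/x))).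
  apply H3. intros; unfold mult; simpl; ring.
  rewrite Hr0. unfold plus, mult, scal; simpl. unfold mult, plus; simpl. field. lra.
Qed.

Lemma cR_minus (f g : R -> R) x : continuous f x -> continuous g x -> continuous (fun r => f r - g r) x.
Proof. apply (@continuous_minus R_UniformSpace R_AbsRing R_NormedModule). Qed.
Lemma cR_plus (f g : R -> R) x : continuous f x -> continuous g x -> continuous (fun r => f r + g r) x.
Proof. apply (@continuous_plus R_UniformSpace R_AbsRing R_NormedModule). Qed.
Lemma cR_mult (f g : R -> R) x : continuous f x -> continuous g x -> continuous (fun r => f r * g r) x.
Proof. apply (@continuous_mult R_UniformSpace R_AbsRing). Qed.
Lemma cR_opp (f : R -> R) x : continuous f x -> continuous (fun r => - f r) x.
Proof. apply (@continuous_opp R_UniformSpace R_AbsRing R_NormedModule). Qed.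

Lemma ode_bound (Rad k M : R) (f U : R -> R) :
  0 < Rad -> 0 < k -> 0 <= M ->
  (forall y, -Rad < y < Rad -> ex_derive f y) ->
  (forall y, -Rad < y < Rad -> ex_derive (Derive f) y) ->
  Derive f 0 = 0 ->
  (forall y, 0 < y < Rad -> 0 = Derive (Derive f) y + Derive f y / y - k * f y + U y) ->
  (forall y, -Rad < y < Rad -> continuous U y) ->
  (forall y, -Rad < y < Rad -> 0 <= f y) ->
  (forall x, 0 < x < Rad -> RInt (fun r => r * U r) 0 x <= M * x^2) ->
  (forall x eps, 0 < x < Rad -> 0 < eps -> exists y, x <= y < Rad /\ f y < eps) ->
  forall x, 0 < x < Rad -> f x <= M * Rad^2 / 2.
Proof.
  intros HR Hk HM Hf1 Hf2 Hf0 Heq HU Hpos Hw Hlim.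
  assert (Hcf : forall y, -Rad < y < Rad -> continuous f y).
  { intros y Hy. apply (@ex_derive_continuous R_AbsRing R_NormedModule). auto. }
  assert (Hcg : forall y, -Rad < y < Rad -> continuous (fun r => r * (k * f r - U r)) y).
  { intros y Hy. apply (cR_mult (fun r => r) (fun r => k * f r - U r)).
    apply continuous_id.
    apply (cR_minus (fun r => k * f r) U).
    apply (cR_mult (fun r => k) f). apply continuous_const. auto. auto. }
  assert (HcU : forall y, -Rad < y < Rad -> continuous (fun r => - (r * U r)) y).
  { intros y Hy. apply (cR_opp (fun r => r * U r)).
    apply (cR_mult (fun r => r) U). apply continuous_id. auto. }
  assert (S1 : forall x, 0 < x < Rad -> x * Derive f x >= - M * x^2).
  { intros x Hx.
    assert (HI : is_RInt (fun r => r * (k * f r - U r)) 0 x (minus (x * Derive f x) (0 * Derive f 0))).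
    { apply (is_RInt_derive (fun r => r * Derive f r)).
      - intros r Hr. rewrite Rmin_left in Hr by lra. rewrite Rmax_right in Hr by lra.
        assert (H := is_derive_mult (fun r => r) (Derive f) r _ _ (is_derive_id r)
                    (Derive_correct _ _ (Hf2 r ltac:(lra)))).
        assert (Hv : r * (k * f r - U r) = plus (mult one (Derive f r)) (mult r (Derive (Derive f) r))).
        { unfold plus, mult, one; simpl. unfold plus, mult, one; simpl.
          destruct (Req_dec r 0) as [->|Hr0].
          - rewrite Hf0. ring.
          - specialize (Heq r ltac:(lra)). field_simplify. 
            assert (Derive (Derive f) r = - Derive f r / r + k * f r - U r) by lra.
            rewrite H0. field. auto. }
        rewrite Hv. apply H. intros; unfold mult; simpl; ring.
      - intros r Hr. rewrite Rmin_left in Hr by lra. rewrite Rmax_right in Hr by lra.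
        apply Hcg. lra. }
    apply (@is_RInt_unique R_CompleteNormedModule) in HI.
    assert (HI2 : RInt (fun r => - (r * U r)) 0 x = - RInt (fun r => r * U r) 0 x).
    { apply (RInt_opp (fun r => r * U r)). apply (@ex_RInt_continuous R_CompleteNormedModule).
      intros z Hz. rewrite Rmin_left in Hz by lra. rewrite Rmax_right in Hz by lra.
      apply (cR_mult (fun r => r) U). apply continuous_id. apply HU; lra. }
    assert (Hle : RInt (fun r => - (r * U r)) 0 x <= RInt (fun r => r * (k * f r - U r)) 0 x).
    { apply RInt_le. lra.
      - apply (@ex_RInt_continuous R_CompleteNormedModule). intros z Hz. rewrite Rmin_left in Hz by lra.
        rewrite Rmax_right in Hz by lra. apply HcU; lra.
      - apply (@ex_RInt_continuous R_CompleteNormedModule). intros z Hz. rewrite Rmin_left in Hz by lra.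
        rewrite Rmax_right in Hz by lra. apply Hcg; lra.
      - intros z Hz. specialize (Hpos z ltac:(lra)). assert (0 <= z * (k * f z)) by (apply Rmult_le_pos; [lra | apply Rmult_le_pos; lra]). lra. }
    rewrite HI, HI2 in Hle. unfold minus, plus, opp in Hle; simpl in Hle.
    specialize (Hw x Hx). lra. }
  assert (S3 : forall x y, 0 < x -> x <= y -> y < Rad -> f x + M * x^2 / 2 <= f y + M * y^2 / 2).
  { intros x y Hx Hxy Hy.
    destruct (MVT_gen (fun r => f r + M * r^2 / 2) x y (fun r => Derive f r + M * r)) as [c [Hc Hmvt]].
    - intros r Hr. rewrite Rmin_left in Hr by lra. rewrite Rmax_right in Hr by lra.
      apply (is_derive_plus f (fun r => M * r^2/2)). apply Derive_correct. apply Hf1. lra.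
      auto_derive; auto. field.
    - intros r Hr. rewrite Rmin_left in Hr by lra. rewrite Rmax_right in Hr by lra.
      apply continuity_pt_filterlim.
      apply (cR_plus f (fun r => M * r^2/2)). apply Hcf; lra.
      apply (@ex_derive_continuous R_AbsRing R_NormedModule). auto_derive. auto.
    - rewrite Rmin_left in Hc by lra. rewrite Rmax_right in Hc by lra.
      assert (Derive f c + M * c >= 0).
      { destruct (Req_dec c 0). lra.
        specialize (S1 c ltac:(lra)).
        assert (c * (Derive f c + M * c) >= 0) by nra. nra. }
      nra. }
  intros x Hx.
  destruct (Rle_dec (f x) (M * Rad^2/2)) as [H|H]; auto.
  destruct (Hlim x (f x - M * Rad^2/2) Hx ltac:(lra)) as [y [Hy Hfy]].
  specialize (S3 x y ltac:(lra) ltac:(lra) ltac:(lra)).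
  assert (y^2 <= Rad^2) by nra.
  assert (0 <= x^2) by nra. nra.
Qed.

Lemma cont_of (g : R -> R) (x : R) :
  (forall eps, 0 < eps -> exists d, 0 < d /\ forall y, Rabs (y - x) < d -> Rabs (g y - g x) < eps) ->
  continuous g x.
Proof.
  intros H. apply filterlim_locally. intros eps.
  destruct (H eps (cond_pos eps)) as [d [Hd Hy]].
  apply (loc_of x d _ Hd). intros y Hy2. apply Hy. exact Hy2.
Qed.

Lemma even_D0 (f : R -> R) d : 0 < d -> (forall y, Rabs y < d -> f (-y) = f y) ->
  ex_derive f 0 -> Derive f 0 = 0.
Proof.
  intros Hd He Hf.
  assert (H : is_derive (fun y => f (-y)) 0 (scal (-1) (Derive f 0))).
  { apply (is_derive_comp f (fun y => -y) 0). rewrite Ropp_0. apply Derive_correct; auto.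
    auto_derive; auto. }
  apply (is_derive_ext_loc _ f) in H.
  2: { apply (loc_of 0 d _ Hd). intros y Hy. apply He. replace (y - 0) with y in Hy by ring. exact Hy. }
  apply is_derive_unique in H. unfold scal in H; simpl in H; unfold mult in H; simpl in H. lra.
Qed.

Theorem lemma4p6 (Rad k : R) (u0 : R -> R -> R) (u v : R -> R -> R -> R) (Tmax : Rbar) :
  0 < Rad -> 0 < k ->
  cont2_on (clB Rad) u0 -> (forall a b, clB Rad a b -> 0 <= u0 a b) -> radial2 Rad u0 ->
  is_KS_solution Rad k u0 u v Tmax ->
  (forall t, 0 <= t -> Rbar_lt (Finite t) Tmax -> radial2 Rad (fun a b => u a b t)) ->
  (forall t, 0 < t -> Rbar_lt (Finite t) Tmax -> radial2 Rad (fun a b => v a b t)) ->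
  (exists M, forall s t, 0 < s < Rad ^ 2 -> 0 < t -> Rbar_lt (Finite t) Tmax ->
     wfun u s t / s <= M) ->
  exists C, 0 < C /\ forall s t, 0 < s < Rad ^ 2 -> 0 < t -> Rbar_lt (Finite t) Tmax ->
     zfun k v s t <= C * s.
Proof.
  intros HR Hk Hu0c Hu0p Hu0r HKS Hru Hrv [M HM].
  unfold is_KS_solution in HKS; cbv zeta in HKS.
  destruct HKS as (HT & Hcu & Hcv & Hupos & Hvpos & Hder & _ & _ & _ & _ & _ & _ & _ & _ & _ & _ & Heqv & _ & Hbdv & _).
  set (M' := Rmax M 0).
  assert (HM'0 : 0 <= M') by apply Rmax_r.
  assert (HMM' : M <= M') by apply Rmax_l.
  set (B := M' * Rad^2 / 2).
  assert (HB : 0 <= B) by (unfold B; assert (0 <= Rad^2) by nra; nra).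
  exists (k * B / 2 + 1). split. { assert (0 <= k * B) by nra. lra. }
  intros s t Hs Ht HtT.
  set (f := fun r => v r 0 t). set (U := fun r => u r 0 t).
  assert (Hint : forall y, -Rad < y < Rad -> inB Rad y 0 /\ 0 < t /\ Rbar_lt (Finite t) Tmax).
  { intros y Hy. unfold inB. split; [nra | auto]. }
  assert (Hf1 : forall y, -Rad < y < Rad -> ex_derive f y).
  { intros y Hy. destruct (Hder y 0 t (Hint y Hy)) as [_ [_ [H1 _]]]. exact H1. }
  assert (Hf2 : forall y, -Rad < y < Rad -> ex_derive (Derive f) y).
  { intros y Hy. destruct (Hder y 0 t (Hint y Hy)) as [_ [_ [_ [_ [H1 _]]]]]. exact H1. }
  assert (Hbound : forall x, 0 < x < Rad -> f x <= M' * Rad^2 / 2).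
  { apply (ode_bound Rad k M' f U); auto.
    - apply (even_D0 f Rad HR).
      + intros y Hy. apply Rabs_lt_between in Hy. unfold f.
        apply (Hrv t Ht HtT). unfold clB. nra. ring.
      + apply Hf1. lra.
    - intros y Hy. specialize (Heqv y 0 t (Hint y ltac:(lra))). unfold lap in Heqv.
      assert (H22 := d22_radial Rad (fun a b => v a b t) y Hy (Hrv t Ht HtT)
                      (fun z Hz => Hf1 z Hz) (Hf2 y ltac:(lra))).
      apply is_derive_unique in H22.
      replace (Defs.d2 (Defs.d2 v) y 0 t) with (Derive f y / y) in Heqv by (symmetry; exact H22).
      exact Heqv.
    - intros y Hy. apply cont_of. intros eps Heps.
      assert (Hcl : clB Rad y 0 /\ 0 <= t /\ Rbar_lt (Finite t) Tmax).
      { unfold clB. split; [nra | split; [lra | auto]]. }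
      destruct (Hcu y 0 t Hcl eps Heps) as [d [Hd Hc]].
      exists (Rmin d (Rad - Rabs y)). split.
      { apply Rmin_glb_lt. lra. assert (Rabs y < Rad) by (apply Rabs_lt_between; lra). lra. }
      intros z Hz. unfold U. apply Hc.
      + assert (Rabs (z - y) < Rad - Rabs y) by (eapply Rlt_le_trans; [exact Hz | apply Rmin_r]).
        assert (Rabs z <= Rabs (z - y) + Rabs y).
        { replace z with ((z - y) + y) at 1 by ring. apply Rabs_triang. }
        assert (Hz2 : Rabs z < Rad) by lra. apply Rabs_lt_between in Hz2.
        unfold clB. split; [nra | split; [lra | auto]].
      + eapply Rlt_le_trans; [exact Hz | apply Rmin_l].
      + replace (0 - 0) with 0 by ring. rewrite Rabs_R0. lra.
      + replace (t - t) with 0 by ring. rewrite Rabs_R0. lra.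
    - intros y Hy. unfold f. apply Hvpos. unfold clB. split; [nra | auto].
    - intros x Hx. assert (Hx2 : 0 < x^2 < Rad^2) by (split; nra).
      specialize (HM (x^2) t Hx2 Ht HtT). unfold wfun in HM.
      rewrite sqrt_pow2 in HM by lra.
      apply Rmult_le_compat_r with (r := x^2) in HM; [|nra].
      unfold Rdiv in HM. rewrite Rmult_assoc, Rinv_l, Rmult_1_r in HM by nra.
      unfold U. nra.
    - intros x eps Hx Heps.
      assert (Hcl : clB Rad Rad 0 /\ 0 < t /\ Rbar_lt (Finite t) Tmax).
      { unfold clB. split; [nra | auto]. }
      destruct (Hcv Rad 0 t Hcl eps Heps) as [d [Hd Hc]].
      assert (Hv0 : v Rad 0 t = 0) by (apply Hbdv; auto; unfold bdB; ring).
      exists (Rmax x (Rad - d/2)). 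
      assert (Hy1 : x <= Rmax x (Rad - d/2)) by apply Rmax_l.
      assert (Hy2 : Rad - d/2 <= Rmax x (Rad - d/2)) by apply Rmax_r.
      assert (Hy3 : Rmax x (Rad - d/2) < Rad) by (apply Rmax_lub_lt; lra).
      split. lra.
      assert (H := Hc (Rmax x (Rad - d/2)) 0 t).
      rewrite Hv0 in H. unfold f.
      assert (Habs : Rabs (v (Rmax x (Rad - d / 2)) 0 t - 0) < eps).
      { apply H.
        - unfold clB. split; [nra | auto].
        - apply Rabs_lt_between. lra.
        - replace (0 - 0) with 0 by ring. rewrite Rabs_R0. lra.
        - replace (t - t) with 0 by ring. rewrite Rabs_R0. lra. }
      apply Rabs_lt_between in Habs. lra. }
  unfold zfun.
  set (a := sqrt s).
  assert (Ha : 0 < a < Rad).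
  { unfold a. split. apply sqrt_lt_R0; lra. apply sqrt_lt_R; lra. }
  assert (Has : a^2 = s) by (unfold a; apply pow2_sqrt; lra).
  assert (Hcf : forall y, -Rad < y < Rad -> continuous f y).
  { intros y Hy. apply (@ex_derive_continuous R_AbsRing R_NormedModule). auto. }
  assert (HI1 : RInt (fun r => r * v r 0 t) 0 a <= RInt (fun r => r * B) 0 a).
  { apply RInt_le. lra.
    - apply (@ex_RInt_continuous R_CompleteNormedModule). intros z Hz.
      rewrite Rmin_left in Hz by lra. rewrite Rmax_right in Hz by lra.
      apply (cR_mult (fun r => r) f). apply continuous_id. apply Hcf; lra.
    - apply (@ex_RInt_continuous R_CompleteNormedModule). intros z Hz.
      apply (cR_mult (fun r => r) (fun _ => B)). apply continuous_id. apply continuous_const.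
    - intros z Hz. apply Rmult_le_compat_l. lra. apply (Hbound z). lra. }
  assert (HI2 : RInt (fun r => r * B) 0 a = B * a^2 / 2).
  { apply (@is_RInt_unique R_CompleteNormedModule).
    replace (B * a^2 / 2) with (minus (B * a^2/2) (B * 0^2/2)).
    apply (is_RInt_derive (fun r => B * r^2/2)).
    - intros x _. auto_derive; auto. field.
    - intros x _. apply (cR_mult (fun r => r) (fun _ => B)). apply continuous_id. apply continuous_const.
    - unfold minus, plus, opp; simpl. field. }
  rewrite HI2, Has in HI1.
  apply Rmult_le_compat_l with (r := k) in HI1; [|lra].
  assert (0 <= s) by lra. nra.
Qed.
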